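(* Let $S$ be a periodic semigroup. Then $S$ is DSC if and only if $S$ is a group.
   Context: $S$ is periodic if for every $s\in S$ there are distinct $m,n\in\mathbb{N}$ with $s^m=s^n$. A diagonal subsemigroup of $S\times S$ is a subsemigroup containing $\{(s,s)\colon s\in S\}$; a congruence is a symmetric and transitive diagonal subsemigroup; $S$ is DSC if every diagonal subsemigroup of $S\times S$ is a congruence on $S$. *)

(* Defs.v *)
(* spow mul s n = s^(n+1)  (positive powers only, as in a semigroup) *)
Fixpoint spow {S : Type} (mul : S -> S -> S) (s : S) (n : nat) : S :=
  match n with
  | O => s
  | Datatypes.S k => mul (spow mul s k) s
  end.

(* S is periodic: for every s there are distinct positive m, n with s^m = s^n.
   Here m = i+1, n = j+1. *)
Definition periodic {S : Type} (mul : S -> S -> S) : Prop :=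
  forall s : S, exists i j : nat, i <> j /\ spow mul s i = spow mul s j.

Definition subsemigroup2 {S : Type} (mul : S -> S -> S) (rho : S -> S -> Prop) : Prop :=
  forall a b c d : S, rho a b -> rho c d -> rho (mul a c) (mul b d).

Definition diagonal_subsemigroup {S : Type} (mul : S -> S -> S) (rho : S -> S -> Prop) : Prop :=
  subsemigroup2 mul rho /\ (forall s : S, rho s s).

Definition congruence {S : Type} (mul : S -> S -> S) (rho : S -> S -> Prop) : Prop :=
  diagonal_subsemigroup mul rho /\
  (forall a b, rho a b -> rho b a) /\
  (forall a b c, rho a b -> rho b c -> rho a c).

Definition DSC {S : Type} (mul : S -> S -> S) : Prop :=
  forall rho : S -> S -> Prop, diagonal_subsemigroup mul rho -> congruence mul rho.

Definition is_group {S : Type} (mul : S -> S -> S) : Prop :=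
  exists e : S,
    (forall x : S, mul e x = x /\ mul x e = x) /\
    (forall x : S, exists y : S, mul x y = e /\ mul y x = e).

(* Main.v *)
Require Import Defs.
From Stdlib Require Import Lia Arith.

Definition m1 {S : Type} (mul : S -> S -> S) (p : option S) (x : S) : S :=
  match p with None => x | Some p => mul p x end.
Definition r1 {S : Type} (mul : S -> S -> S) (x : S) (q : option S) : S :=
  match q with None => x | Some q => mul x q end.

Section Aux.
Context {T : Type} (mul : T -> T -> T)
  (mul_assoc : forall x y z : T, mul x (mul y z) = mul (mul x y) z).

Lemma spow_comm x n : mul x (spow mul x n) = mul (spow mul x n) x.
Proof.
  induction n; simpl; [reflexivity|].
  rewrite mul_assoc, IHn. reflexivity.
Qed.

Lemma spow_add x m n : spow mul x (m + S n) = mul (spow mul x m) (spow mul x n).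
Proof.
  induction n.
  - replace (m + 1) with (S m) by lia. reflexivity.
  - replace (m + S (S n)) with (S (m + S n)) by lia. simpl.
    rewrite IHn, mul_assoc. reflexivity.
Qed.

Lemma spow_flip x n : spow (fun a b => mul b a) x n = spow mul x n.
Proof.
  induction n; simpl; [reflexivity|]. rewrite IHn. apply spow_comm.
Qed.

Lemma idem_aux u i j : i < j -> spow mul u i = spow mul u j ->
  exists K, mul (spow mul u K) (spow mul u K) = spow mul u K.
Proof.
  intros Hij Heq. set (d := j - i).
  assert (sh1 : forall r, spow mul u (i + d + r) = spow mul u (i + r)).
  { intros [|r].
    - replace (i + d + 0) with j by (unfold d; lia). rewrite Nat.add_0_r. auto.
    - rewrite !spow_add. replace (i + d) with j by (unfold d; lia). rewrite Heq. auto. }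
  assert (sh : forall t r, spow mul u (i + t * d + r) = spow mul u (i + r)).
  { induction t; intros r.
    - f_equal. lia.
    - replace (i + S t * d + r) with (i + d + (t * d + r)) by lia.
      rewrite sh1. replace (i + (t * d + r)) with (i + t * d + r) by lia. auto. }
  assert (Hd1 : 1 <= d) by (unfold d; lia).
  assert (Hid : i <= i * d) by nia.
  exists (i * d + (d - 1)).
  rewrite <- spow_add.
  replace (i * d + (d - 1) + S (i * d + (d - 1)))
    with (i + (S i) * d + (i * d + (d - 1) - i)) by nia.
  rewrite sh. f_equal. lia.
Qed.

Lemma idem (hper : periodic mul) u :
  exists K, mul (spow mul u K) (spow mul u K) = spow mul u K.
Proof.
  destruct (hper u) as [i [j [Hne Heq]]].
  destruct (Nat.lt_total i j) as [H|[H|H]].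
  - eapply idem_aux; eauto.
  - contradiction.
  - eapply idem_aux; eauto.
Qed.

Lemma simple (hd : DSC mul) a b : exists p q, b = m1 mul p (r1 mul a q).
Proof.
  set (rho := fun x y => x = y \/ exists p q, x = m1 mul p (r1 mul a q)).
  assert (Hd : diagonal_subsemigroup mul rho).
  { split; [|intros s; left; reflexivity].
    intros x y z w Hxy Hzw.
    destruct Hxy as [Exy | [p [q Hx]]].
    - destruct Hzw as [Ezw | [p [q Hz]]].
      + left; subst; reflexivity.
      + right. subst z y.
        exists (Some (match p with None => x | Some p => mul x p end)), q.
        destruct p; simpl; auto.
    - right. subst x.
      exists p, (Some (match q with None => z | Some q => mul q z end)).
      destruct p, q; simpl; rewrite ?mul_assoc; auto. }
  destruct (hd rho Hd) as [_ [Hsym _]].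
  assert (Hab : rho a b) by (right; exists None, None; reflexivity).
  destruct (Hsym _ _ Hab) as [E | H]; [|exact H].
  subst; exists None, None; reflexivity.
Qed.

Lemma iter_left (p : option T) n a b :
  Nat.iter n (m1 mul p) (mul a b) = mul (Nat.iter n (m1 mul p) a) b.
Proof.
  induction n; simpl; [reflexivity|]. rewrite IHn.
  destruct p; simpl; auto.
Qed.

Lemma key (hper : periodic mul) (hd : DSC mul) x z :
  exists s, x = r1 mul (mul x z) s.
Proof.
  destruct (simple hd (mul x z) x) as [p [q Hx]].
  set (u := r1 mul z q).
  assert (Hx' : x = m1 mul p (mul x u)).
  { rewrite Hx at 1. unfold u. destruct q; simpl; rewrite ?mul_assoc; auto. }
  assert (Hit : forall n, x = Nat.iter (S n) (m1 mul p) (mul x (spow mul u n))).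
  { induction n.
    - simpl. exact Hx'.
    - transitivity (Nat.iter (S n) (m1 mul p) (mul (m1 mul p (mul x u)) (spow mul u n))).
      + rewrite <- Hx'. exact IHn.
      + assert (E : mul (m1 mul p (mul x u)) (spow mul u n)
                   = m1 mul p (mul (mul x u) (spow mul u n)))
          by (destruct p; simpl; auto).
        rewrite E, <- Nat.iter_succ_r. simpl spow.
        rewrite <- spow_comm, mul_assoc. reflexivity. }
  destruct (idem hper u) as [K HK].
  assert (Hxe : x = mul x (spow mul u K)).
  { rewrite (Hit K) at 1. rewrite <- HK at 1. rewrite mul_assoc, iter_left, <- Hit. reflexivity. }
  assert (Hw : spow mul u K = mul u (spow mul u (K + K))).
  { rewrite <- HK, <- spow_add. replace (K + S K) with (S (K + K)) by lia.
    simpl. rewrite spow_comm. reflexivity. }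
  rewrite Hw, mul_assoc in Hxe.
  unfold u in Hxe. destruct q as [q|]; simpl in Hxe.
  - exists (Some (mul q (spow mul u (K + K)))). simpl.
    change (x = mul (mul x z) (mul q (spow mul u (K + K)))).
    rewrite Hxe at 1. rewrite (mul_assoc x z q), <- (mul_assoc (mul x z) q). reflexivity.
  - exists (Some (spow mul u (K + K))). exact Hxe.
Qed.

Definition Rle x y := exists s, x = r1 mul y s.

Lemma Rle_trans x y z : Rle x y -> Rle y z -> Rle x z.
Proof.
  intros [s Hs] [t Ht]. subst.
  exists (match t with None => s | Some t => Some (match s with None => t | Some s => mul t s end) end).
  destruct s, t; simpl; rewrite ?mul_assoc; auto.
Qed.

Lemma Rall (hper : periodic mul) (hd : DSC mul) a b : Rle b a.
Proof.
  set (rho := fun x y => (Rle x a /\ Rle y b) \/ Rle x y).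
  assert (Hd : diagonal_subsemigroup mul rho).
  { split; [|intros s; right; exists None; reflexivity].
    intros x y z w Hxy Hzw.
    assert (Hl : forall x z, Rle (mul x z) x) by (intros; exists (Some z0); reflexivity).
    destruct Hxy as [[H1 H2] | H].
    - left; split; eapply Rle_trans; eauto.
    - right. eapply Rle_trans; [apply Hl|]. eapply Rle_trans; [exact H|].
      apply (key hper hd y w). }
  destruct (hd rho Hd) as [_ [Hsym _]].
  assert (Hab : rho a b) by (left; split; exists None; reflexivity).
  destruct (Hsym _ _ Hab) as [[H _] | H]; exact H.
Qed.

End Aux.

Lemma flip_DSC {S : Type} (mul : S -> S -> S) : DSC mul -> DSC (fun a b => mul b a).
Proof.
  intros hd rho [Hs Hr].
  assert (Hd : diagonal_subsemigroup mul rho).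
  { split; auto. intros a b c d H1 H2. exact (Hs c d a b H2 H1). }
  destruct (hd rho Hd) as [_ [H1 H2]].
  split; [split; auto|]. auto.
Qed.

Lemma group_DSC {T : Type} (mul : T -> T -> T)
  (mul_assoc : forall x y z : T, mul x (mul y z) = mul (mul x y) z)
  (hper : periodic mul) (hg : is_group mul) : DSC mul.
Proof.
  destruct hg as [e [Hid Hinv]].
  assert (canc : forall a b c, mul a b = mul a c -> b = c).
  { intros a b c H. destruct (Hinv a) as [y [_ Hya]].
    rewrite <- (proj1 (Hid b)), <- (proj1 (Hid c)), <- Hya, <- !mul_assoc, H.
    reflexivity. }
  assert (aux : forall x i j, i < j -> spow mul x i = spow mul x j ->
             exists n, spow mul x n = e).
  { intros x i j Hij H. exists (j - i - 1).
    replace j with (i + S (j - i - 1)) in H by lia.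
    rewrite spow_add in H by exact mul_assoc.
    apply (canc (spow mul x i)). rewrite <- H. symmetry. apply Hid. }
  assert (pe : forall x, exists n, spow mul x n = e).
  { intros x. destruct (hper x) as [i [j [Hne H]]].
    destruct (Nat.lt_total i j) as [h|[h|h]]; [eauto|contradiction|].
    symmetry in H. eauto. }
  assert (pm : forall x n, spow mul x n = e -> forall m, spow mul x (m * S n + n) = e).
  { intros x n Hn m. induction m.
    - simpl. exact Hn.
    - replace (S m * S n + n) with ((m * S n + n) + S n) by nia.
      rewrite spow_add by exact mul_assoc. rewrite IHm, Hn. apply Hid. }
  intros rho [Hs Hr].
  assert (pw : forall a b k, rho a b -> rho (spow mul a k) (spow mul b k)).
  { intros a b k H. induction k; simpl; auto. }
  split; [split; auto|]. split.
  - intros a b H.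
    destruct (pe a) as [na Ha]. destruct (pe b) as [nb Hb].
    set (k := nb * S na + na).
    assert (HA : spow mul a k = e) by (apply pm; exact Ha).
    assert (HB : spow mul b k = e).
    { replace k with (na * S nb + nb) by (unfold k; nia). apply pm; exact Hb. }
    assert (Hu : mul (spow mul a (k + k)) a = e).
    { change (mul (spow mul a (k + k)) a) with (spow mul a (S (k + k))).
      replace (S (k + k)) with (k + S k) by lia.
      rewrite spow_add by exact mul_assoc. rewrite HA. apply Hid. }
    assert (Hv : mul b (spow mul b (k + k)) = e).
    { rewrite spow_comm by exact mul_assoc.
      change (mul (spow mul b (k + k)) b) with (spow mul b (S (k + k))).
      replace (S (k + k)) with (k + S k) by lia.
      rewrite spow_add by exact mul_assoc. rewrite HB. apply Hid. }
    pose proof (Hs _ _ _ _ (Hs _ _ _ _ (Hr b) (pw _ _ (k + k) H)) (Hr a)) as R.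
    rewrite <- (mul_assoc b (spow mul a (k + k)) a), Hu, Hv in R.
    rewrite (proj2 (Hid b)), (proj1 (Hid a)) in R. exact R.
  - intros a b c H1 H2.
    destruct (Hinv b) as [w [Hbw Hwb]].
    pose proof (Hs _ _ _ _ (Hs _ _ _ _ H1 (Hr w)) H2) as R.
    rewrite <- (mul_assoc a w b), Hwb, Hbw in R.
    rewrite (proj2 (Hid a)), (proj1 (Hid c)) in R. exact R.
Qed.

Theorem mainTheorem6 (S : Type) (mul : S -> S -> S)
  (mul_assoc : forall x y z : S, mul x (mul y z) = mul (mul x y) z)
  (S_nonempty : inhabited S)
  (hper : periodic mul) :
  DSC mul <-> is_group mul.
Proof.
  split.
  - intros hd.
    assert (fassoc : forall x y z : S, mul (mul z y) x = mul z (mul y x))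
      by (intros; rewrite mul_assoc; auto).
    assert (fper : periodic (fun a b => mul b a)).
    { intros s. destruct (hper s) as [i [j [H1 H2]]]. exists i, j.
      rewrite !(spow_flip mul mul_assoc); auto. }
    assert (HR := Rall mul mul_assoc hper hd).
    assert (HL := Rall (fun a b => mul b a) fassoc fper (flip_DSC mul hd)).
    destruct S_nonempty as [x0].
    destruct (idem mul mul_assoc hper x0) as [K HK].
    remember (spow mul x0 K) as e eqn:Ee. clear Ee.
    assert (Hid : forall x, mul e x = x /\ mul x e = x).
    { intros x. split.
      * destruct (HR e x) as [[s|] Hs]; cbn [r1 m1] in Hs; subst; auto.
        rewrite mul_assoc, HK; auto.
      * destruct (HL e x) as [[s|] Hs]; cbn [r1 m1] in Hs; subst; auto.
        rewrite <- mul_assoc, HK; auto. }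
    exists e. split; [exact Hid|].
    intros x.
    destruct (HR x e) as [[s|] Hs]; cbn [r1 m1] in Hs.
    + destruct (HL x e) as [[t|] Ht]; cbn [r1 m1] in Ht.
      * exists s. split; auto.
        assert (Hts : t = s).
        { transitivity (mul t e); [symmetry; apply Hid|].
          rewrite Hs, mul_assoc, <- Ht. apply Hid. }
        subst t. auto.
      * exists e. subst x. auto.
    + exists e. subst x. auto.
  - apply group_DSC; auto.
Qed.
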